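(* Let $V$ be a vertex operator superalgebra, $g$ an automorphism of $V$ of finite order, $T'$ the order of $\sigma g$, and let $n\in\frac{1}{T'}\mathbb{Z}_{\ge 0}$ with $\ell=\lfloor n\rfloor$. Then $A_{g,n}(V)$ is a quotient algebra of $A_{\sigma,\ell}(V^{\langle\sigma g\rangle})$, where $\langle\sigma g\rangle$ is the cyclic group generated by $\sigma g$, $V^{\langle\sigma g\rangle}$ is the fixed-point vertex operator subsuperalgebra, and $\sigma$ is regarded as an automorphism of $V^{\langle\sigma g\rangle}$. More precisely, $V^{\langle\sigma g\rangle}=V^{0*}$, the identity map of $V^{0*}$ sends $O_{\sigma,\ell}(V^{\langle\sigma g\rangle})$ into $O_{g,n}(V)$, the products $*_{\sigma,\ell}$ and $*_{g,n}$ coincide on $V^{0*}$, and the induced map $A_{\sigma,\ell}(V^{\langle\sigma g\rangle})\to A_{g,n}(V)$ is a surjective algebra homomorphism.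
   Context: A vertex operator superalgebra $V=\bigoplus_{n\in\frac12\mathbb Z}V_n=V_{\bar0}\oplus V_{\bar1}$ has $V_{\bar0}=\bigoplus_{n\in\mathbb Z}V_n$, $V_{\bar1}=\bigoplus_{n\in\frac12+\mathbb Z}V_n$; its canonical automorphism $\sigma$ acts as $(-1)^i$ on $V_{\bar i}$. Write $Y(v,z)=\sum v_nz^{-n-1}$, $Y(\omega,z)=\sum L(n)z^{-n-2}$. For $g$ of finite order with $T'=o(\sigma g)$, let $V^{r*}=\{v\in V:\sigma g v=e^{-2\pi i r/T'}v\}$ for $0\le r\le T'-1$. Write $n=\ell+\frac{i}{T'}$ with $\ell,i\in\mathbb Z_{\ge0}$, $0\le i\le T'-1$; for $0\le r\le T'-1$ set $\delta_i(r)=1$ if $r\le i$, $\delta_i(r)=0$ if $i<r\le T'-1$, and $\delta_i(T')=0$. For $v\in V$ and homogeneous $u\in V^{r*}$ define $u\circ_{g,n}v=\mathrm{Res}_z Y(u,z)v\,\frac{(1+z)^{\mathrm{wt}\,u-1+\delta_i(r)+\ell+r/T'}}{z^{2\ell+\delta_i(r)+\delta_i(T'-r)+1}}$, and $u*_{g,n}v=\sum_{m=0}^{\ell}(-1)^m\binom{m+\ell}{\ell}\mathrm{Res}_zY(u,z)v\frac{(1+z)^{\mathrm{wt}\,u+\ell}}{z^{\ell+m+1}}$ if $r=0$, and $u*_{g,n}v=0$ if $r>0$; extend bilinearly. $O_{g,n}(V)$ is the span of all $u\circ_{g,n}v$ and $L(-1)u+L(0)u$ ($u,v\in V$), and $A_{g,n}(V)=V/O_{g,n}(V)$,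 which is known to be an associative algebra under the product induced by $*_{g,n}$. For a vertex operator superalgebra $U$ with automorphism $\sigma$ (so $\sigma\cdot\sigma=1$, $T'=1$), $A_{\sigma,\ell}(U)$ is defined by the same recipe; in particular $O_{\sigma,\ell}(U)$ is spanned by $\mathrm{Res}_zY(u,z)v\frac{(1+z)^{\mathrm{wt}\,u+\ell}}{z^{2\ell+2}}$ and $(L(-1)+L(0))u$. *)

(* Defs.v *)
From HB Require Import structures.
From mathcomp Require Import all_boot all_order all_algebra.
From mathcomp Require Import all_classical all_reals all_analysis.
From mathcomp Require Import complex.
From Stdlib Require Import ClassicalEpsilon.

Set Implicit Arguments.
Unset Strict Implicit.
Unset Printing Implicit Defensive.

Import Order.TTheory GRing.Theory Num.Theory.
Local Open Scope ring_scope.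

Section VOSA.
Variable R : realType.
Local Notation C := R[i].

(*   wtp k   : projection of V = (+)_{n in 1/2 Z} V_n onto V_{k/2}       *)
(*   Yop u v m = u_m v   (Y(u,z) = sum_m u_m z^{-m-1})                  *)
Record vosa_data := VosaData {
  vcar :> lmodType C;
  wtp : int -> vcar -> vcar;
  Yop : vcar -> vcar -> int -> vcar;
  vac : vcar;
  omg : vcar;
  cc : C;
  sig : vcar -> vcar }.

Arguments wtp : clear implicits.
Arguments Yop : clear implicits.
Arguments vac : clear implicits.
Arguments omg : clear implicits.
Arguments cc : clear implicits.
Arguments sig : clear implicits.

Variable V : vosa_data.

Definition Homog (k : int) (v : V) : Prop := wtp V k v = v.

Definition Lop (m : int) (v : V) : V := Yop V (omg V) v (m + 1).

Definition half (k : int) : C := k%:~R / 2%:R.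

Definition parity (k : int) : bool := odd `|k|%N.

Definition gbinom (a : C) (j : nat) : C :=
  (\prod_(t < j) (a - t%:R)) / (j`!)%:R.

Definition in_span (P : V -> Prop) (x : V) : Prop :=
  exists (n : nat) (f : 'I_n -> V) (c : 'I_n -> C),
    (forall j, P (f j)) /\ x = \sum_(j < n) c j *: f j.

End VOSA.

Arguments wtp {R} v _ _.
Arguments Yop {R} v _ _ _.
Arguments vac {R} v.
Arguments omg {R} v.
Arguments cc {R} v.
Arguments sig {R} v _.
Arguments Homog {R V} k v.
Arguments Lop {R V} m v.
Arguments half {R} k.

Section Laws.
Variable R : realType.
Local Notation C := R[i].

Record is_vosa (V : vosa_data R) : Prop := {
  wtp_lin : forall k (a : C) (x y : V),
      wtp V k (a *: x + y) = a *: wtp V k x + wtp V k y;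
  wtp_idem : forall k m (x : V),
      wtp V k (wtp V m x) = if k == m then wtp V m x else 0;
  wtp_decomp : forall x : V, exists N : nat,
      (forall k : int, (N%:Z < `|k|)%R -> wtp V k x = 0) /\
      x = \sum_(j < N.*2.+1) wtp V (j%:Z - N%:Z) x;
  wtp_fd : forall k, exists (n : nat) (f : 'I_n -> V), forall x, Homog k x ->
      exists c : 'I_n -> C, x = \sum_(j < n) c j *: f j;
  wtp_low : exists N : int, forall k, (k < N)%R -> forall x : V, wtp V k x = 0;
  Y_linl : forall (a : C) (u u' v : V) m,
      Yop V (a *: u + u') v m = a *: Yop V u v m + Yop V u' v m;
  Y_linr : forall (a : C) (u v v' : V) m,
      Yop V u (a *: v + v') m = a *: Yop V u v m + Yop V u v' m;
  Y_trunc : forall u v : V, exists N : int, forall m, (N <= m)%R -> Yop V u v m = 0;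
  Y_vac : forall (v : V) m, Yop V (vac V) v m = if m == -1 then v else 0;
  Y_create : forall (u : V) m, (0 <= m)%R -> Yop V u (vac V) m = 0;
  Y_create1 : forall u : V, Yop V u (vac V) (-1) = u;
  (* Jacobi identity (Borcherds component form) for parity-homogeneous u, v *)
  Y_jacobi : forall k1 k2 (u v w : V) (p q r : int), Homog k1 u -> Homog k2 v ->
      exists N : nat, forall M : nat, (N <= M)%N ->
        \sum_(j < M) gbinom p%:~R j *: Yop V (Yop V u v (r + j%:Z)) w (p + q - j%:Z)
        = \sum_(j < M) ((-1) ^+ j * gbinom r%:~R j) *:
            (Yop V u (Yop V v w (q + j%:Z)) (p + r - j%:Z)
             - ((-1) ^+ `|r|%N * (-1) ^+ (parity k1 && parity k2)) *:
                 Yop V v (Yop V u w (p + j%:Z)) (q + r - j%:Z));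
  omg_wt : Homog 4 (omg V);
  vir : forall (m n : int) (v : V),
      Lop m (Lop n v) - Lop n (Lop m v)
      = (m - n)%:~R *: Lop (m + n) v
        + (if m + n == 0 then (m ^+ 3 - m)%:~R / 12%:R * cc V else 0) *: v;
  L0_wt : forall k (v : V), Homog k v -> Lop 0 v = half k *: v;
  Lm1_der : forall (u v : V) (m : int),
      Yop V (Lop (-1) u) v m = - (m%:~R : C) *: Yop V u v (m - 1);
  sig_lin : forall (a : C) (x y : V), sig V (a *: x + y) = a *: sig V x + sig V y;
  sig_homog : forall k (v : V), Homog k v -> sig V v = (-1) ^+ parity k *: v }.

Definition is_aut (V : vosa_data R) (g : V -> V) : Prop :=
  [/\ forall (a : C) (x y : V), g (a *: x + y) = a *: g x + g y,
      bijective g,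
      forall (u v : V) m, g (Yop V u v m) = Yop V (g u) (g v) m,
      g (vac V) = vac V & g (omg V) = omg V].

Definition is_vosa_hom (U V : vosa_data R) (f : U -> V) : Prop :=
  [/\ forall (a : C) (x y : U), f (a *: x + y) = a *: f x + f y,
      forall (u v : U) m, f (Yop U u v m) = Yop V (f u) (f v) m,
      f (vac U) = vac V & f (omg U) = omg V].

Definition is_order (V : vosa_data R) (h : V -> V) (T : nat) : Prop :=
  [/\ (0 < T)%N, forall v, iter T h v = v &
      forall k, (0 < k < T)%N -> exists v, iter k h v <> v].

Variable V : vosa_data R.

Definition sigg (g : V -> V) (v : V) : V := sig V (g v).

Definition zeta (T r : nat) : C :=
  let th := (2%:R * pi * r%:R / T%:R : R) in Complex (cos th) (- sin th).

Definition vstar (g : V -> V) (T r : nat) (v : V) : Prop :=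
  sigg g v = zeta T r *: v.

Definition fixed_pt (g : V -> V) (v : V) : Prop :=
  forall k : nat, iter k (sigg g) v = v.

Definition deltai (i r : nat) : nat := (r <= i)%N.

Definition trunc_bd (u v : V) : nat :=
  epsilon (inhabits 0%N)
    (fun N : nat => forall m : int, (N%:Z <= m)%R -> Yop V u v m = 0).

(* Res_z Y(u,z)v (1+z)^a / z^b  =  sum_{j >= 0} binom(a,j) u_{j-b} v *)
Definition res (a : C) (b : nat) (u v : V) : V :=
  \sum_(j < trunc_bd u v + b) gbinom a j *: Yop V u v (j%:Z - b%:Z).

(* u o_{g,n} v for u in V^{r*} homogeneous of weight k/2, n = l + i/T *)
Definition circ (T l i : nat) (k : int) (r : nat) (u v : V) : V :=
  res (half k - 1 + (deltai i r)%:R + l%:R + r%:R / T%:R)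
      (2 * l + deltai i r + deltai i (T - r) + 1) u v.

Definition Ogen (g : V -> V) (T l i : nat) (x : V) : Prop :=
  (exists (r : nat) (k : int) (u v : V),
      [/\ (r < T)%N, Homog k u, vstar g T r u & x = circ T l i k r u v])
  \/ (exists u : V, x = Lop (-1) u + Lop 0 u).

Definition Ogn (g : V -> V) (T l i : nat) (x : V) : Prop :=
  in_span (Ogen g T l i) x.

Definition star_hom (l : nat) (k : int) (u v : V) : V :=
  \sum_(m < l.+1) ((-1) ^+ m * ('C(m + l, l))%:R) *: res (half k + l%:R) (l + m + 1) u v.

Definition pi0 (g : V -> V) (T : nat) (u : V) : V :=
  (T%:R)^-1 *: \sum_(j < T) iter j (sigg g) u.

Definition wbound (u : V) : nat :=
  epsilon (inhabits 0%N)
    (fun N : nat => forall k : int, (N%:Z < `|k|)%R -> wtp V k u = 0).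

(* bilinear extension of *_{g,n}: zero on V^{r*}, r > 0 *)
Definition star (g : V -> V) (T l : nat) (u v : V) : V :=
  \sum_(j < (wbound u).*2.+1)
     star_hom l (j%:Z - (wbound u)%:Z) (pi0 g T (wtp V (j%:Z - (wbound u)%:Z) u)) v.

End Laws.

Arguments is_aut {R} V g.
Arguments is_vosa_hom {R} U V f.
Arguments is_order {R} V h T.
Arguments sigg {R} V g v.
Arguments zeta {R} T r.
Arguments vstar {R} V g T r v.
Arguments fixed_pt {R} V g v.
Arguments circ {R} V T l i k r u v.
Arguments Ogen {R} V g T l i x.
Arguments Ogn {R} V g T l i x.
Arguments star_hom {R} V l k u v.
Arguments pi0 {R} V g T u.
Arguments star {R} V g T l u v.
Arguments res {R} V a b u v.

(* Main.v *)
From Pilot Require Import Defs.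
From HB Require Import structures.
From mathcomp Require Import all_boot all_order all_algebra.
From mathcomp Require Import all_classical all_reals all_analysis.
From mathcomp Require Import complex.
From mathcomp Require Import zify ring lra.
From Stdlib Require Import ClassicalEpsilon.
Import Order.TTheory GRing.Theory Num.Theory.
Local Open Scope ring_scope.
Set Implicit Arguments.
Unset Strict Implicit.
Unset Printing Implicit Defensive.

Section Lin.
Variable R : realType.
Local Notation C := R[i].
Local Notation gbinom := (@gbinom R).

Section LinF.
Variables (U W : lmodType C) (f : U -> W).
Hypothesis Hf : forall (a : C) x y, f (a *: x + y) = a *: f x + f y.

Lemma linf0 : f 0 = 0.
Proof.
have H := Hf 1 0 0; rewrite addr0 !scale1r in H.
by apply: (addrI (f 0)); rewrite addr0 -H.
Qed.

Lemma linfD x y : f (x + y) = f x + f y.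
Proof. by have := Hf 1 x y; rewrite !scale1r. Qed.

Lemma linfZ a x : f (a *: x) = a *: f x.
Proof. by have := Hf a x 0; rewrite !addr0 linf0 addr0. Qed.

Lemma linfN x : f (- x) = - f x.
Proof. by rewrite -scaleN1r linfZ scaleN1r. Qed.

Lemma linfB x y : f (x - y) = f x - f y.
Proof. by rewrite linfD linfN. Qed.

Lemma linf_sum n (F : 'I_n -> U) : f (\sum_(j < n) F j) = \sum_(j < n) f (F j).
Proof.
elim: n F => [|n IH] F; first by rewrite !big_ord0 linf0.
by rewrite !big_ord_recr /= linfD IH.
Qed.
End LinF.


Lemma bump0S (j : nat) : bump 0 j = j.+1. Proof. by []. Qed.

Lemma gbinom0 a : gbinom a 0 = 1.
Proof. by rewrite /gbinom big_ord0 fact0 divr1. Qed.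

Lemma natC_neq0 n : (n.+1%:R : C) != 0.
Proof. by rewrite pnatr_eq0. Qed.

Lemma factC_neq0 n : ((n`!)%:R : C) != 0.
Proof. by rewrite pnatr_eq0 -lt0n fact_gt0. Qed.

Lemma gbinomS a j : (j.+1)%:R * gbinom a j.+1 = a * gbinom (a - 1) j.
Proof.
rewrite /gbinom big_ord_recl /= subr0.
rewrite (eq_bigr (fun t : 'I_j => a - 1 - t%:R)); last first.
  by move=> t _; rewrite /bump /= add1n -addn1 natrD opprD addrA addrAC.
rewrite factS natrM invfM.
have h1 := natC_neq0 j; have h2 := factC_neq0 j.
field; by apply/andP.
Qed.

Lemma vandermonde n : forall a c : C,
  \sum_(j < n.+1) gbinom a j * gbinom c (n - j) = gbinom (a + c) n.
Proof.
elim: n => [|n IH] a c.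
  by rewrite big_ord1 /= !gbinom0 mulr1.
apply: (mulfI (natC_neq0 n)).
rewrite gbinomS.
have E : forall j : 'I_n.+2, (n.+1)%:R * (gbinom a j * gbinom c (n.+1 - j))
   = j%:R * gbinom a j * gbinom c (n.+1 - j) + (n.+1 - j)%:R * gbinom a j * gbinom c (n.+1 - j).
  move=> j; rewrite -mulrA -mulrA -mulrDl -natrD subnKC //.
  by rewrite -ltnS ltn_ord.
rewrite mulr_sumr (eq_bigr _ (fun j _ => E j)) big_split /=.
rewrite big_ord_recl /= mul0r mul0r add0r.
rewrite (eq_bigr (fun j : 'I_n.+1 => a * (gbinom (a-1) j * gbinom c (n - j)))); last first.
  by move=> j _; rewrite bump0S mulrA gbinomS subSS.
rewrite -mulr_sumr IH.
rewrite big_ord_recr /= subnn mul0r mul0r addr0.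
have E2 : forall j : 'I_n.+1, (n.+1 - widen_ord (leqnSn n.+1) j)%:R * gbinom a (widen_ord (leqnSn n.+1) j) *
   gbinom c (n.+1 - widen_ord (leqnSn n.+1) j) = c * (gbinom a j * gbinom (c - 1) (n - j)).
  move=> j /=; rewrite subSn; last by rewrite -ltnS ltn_ord.
  rewrite mulrAC gbinomS -mulrA; congr (_ * _); exact: mulrC.
rewrite (eq_bigr _ (fun j _ => E2 j)) -mulr_sumr IH.
have -> : a - 1 + c = a + c - 1 by ring.
have -> : a + (c - 1) = a + c - 1 by ring.
by rewrite mulrDl.
Qed.

End Lin.

Section VO.
Variable R : realType.
Local Notation C := R[i].
Local Notation half := (@Pilot.Defs.half R).
Variable V : vosa_data R.
Hypothesis HV : is_vosa V.

Lemma Lop_l m (a : C) (x y : V) : Lop m (a *: x + y) = a *: Lop m x + Lop m y.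
Proof. by rewrite /Lop (Y_linr HV). Qed.

Lemma homog_wtp k (x : V) : Homog k (wtp V k x).
Proof. by rewrite /Homog (wtp_idem HV) eqxx. Qed.

Lemma homog0 k : Homog k (0 : V).
Proof. by rewrite /Homog (linf0 (wtp_lin HV k)). Qed.

Lemma homogL k (a : C) (x y : V) : Homog k x -> Homog k y -> Homog k (a *: x + y).
Proof. by rewrite /Homog (wtp_lin HV) => -> ->. Qed.

Lemma homog_sum k n (F : 'I_n -> V) : (forall j, Homog k (F j)) -> Homog k (\sum_(j < n) F j).
Proof.
elim: n F => [|n IH] F HF; first by rewrite big_ord0; apply: homog0.
rewrite big_ord_recr /= -[X in X + _]scale1r; apply: homogL; last exact: HF.
by apply: IH => j; apply: HF.
Qed.

Lemma wtpL0 m (x : V) : wtp V m (Lop 0 x) = half m *: wtp V m x.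
Proof.
have [N [_ Hx]] := wtp_decomp HV x.
rewrite [in LHS]Hx (linf_sum (Lop_l 0)) (linf_sum (wtp_lin HV m)).
rewrite [in RHS]Hx (linf_sum (wtp_lin HV m)) scaler_sumr.
apply: eq_bigr => j _.
rewrite (L0_wt HV (homog_wtp _ _)) (linfZ (wtp_lin HV m)) (wtp_idem HV).
by case: eqP => [->|_]; rewrite ?scaler0.
Qed.

Lemma half_inj : injective half.
Proof.
move=> k m /(congr1 ( *%R^~ 2%:R)); rewrite /half !divfK ?pnatr_eq0 //.
exact: intr_inj.
Qed.

Lemma eigen_homog k (x : V) : Lop 0 x = half k *: x -> Homog k x.
Proof.
move=> Hx.
have Z : forall m, m != k -> wtp V m x = 0.
  move=> m nmk; have := wtpL0 m x; rewrite Hx (linfZ (wtp_lin HV m)) => /eqP.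
  rewrite -subr_eq0 -scalerBl scaler_eq0 subr_eq0 => /orP [/eqP /half_inj Ek|/eqP //].
  by move: nmk; rewrite Ek eqxx.
have [N [_ Hd]] := wtp_decomp HV x.
rewrite /Homog [in LHS]Hd (linf_sum (wtp_lin HV k)) [in RHS]Hd.
apply: eq_bigr => j _; rewrite (wtp_idem HV).
case: eqP => [//| ne].
rewrite Z //; apply/eqP => E; exact: ne (esym E).
Qed.

Lemma halfD2 k : half (k + 2) = half k + 1.
Proof. by rewrite /half intrD; field. Qed.

Lemma DHomog k (y : V) : Homog k y -> Homog (k + 2) (Lop (-1) y).
Proof.
move=> Hy; apply: eigen_homog.
have := vir HV 0 (-1) y.
rewrite (L0_wt HV Hy) (linfZ (Lop_l (-1))) /= scale0r addr0 sub0r opprK.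
have -> : ((1 : int)%:~R : C) = 1 by [].
rewrite scale1r => /eqP; rewrite subr_eq => /eqP ->.
by rewrite halfD2 scalerDl scale1r addrC.
Qed.

Lemma DHomog_iter k (x : V) m : Homog k x -> Homog (k + 2 * m%:Z) (iter m (Lop (-1)) x).
Proof.
move=> Hx; elim: m => [|m IH] /=; first by rewrite mulr0 addr0.
have -> : k + 2 * m.+1%:Z = (k + 2 * m%:Z) + 2 by lia.
exact: DHomog.
Qed.

End VO.

Section Span.
Variable R : realType.
Local Notation C := R[i].
Variable V : lmodType C.
Variable V0 : vosa_data R.

Lemma span0 (P : V0 -> Prop) : in_span P 0.
Proof. exists 0%N, (fun _ => 0), (fun _ => 0); split; [by case | by rewrite big_ord0]. Qed.

Lemma span_gen (P : V0 -> Prop) x : P x -> in_span P x.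
Proof.
move=> Px; exists 1%N, (fun _ => x), (fun _ => 1); split => //.
by rewrite big_ord1 scale1r.
Qed.

Lemma spanZ (P : V0 -> Prop) (a : C) x : in_span P x -> in_span P (a *: x).
Proof.
move=> [n [f [c [Hf ->]]]]; exists n, f, (fun j => a * c j); split => //.
by rewrite scaler_sumr; apply: eq_bigr => j _; rewrite scalerA.
Qed.

Lemma spanD (P : V0 -> Prop) x y : in_span P x -> in_span P y -> in_span P (x + y).
Proof.
move=> [n1 [f1 [c1 [H1 ->]]]] [n2 [f2 [c2 [H2 ->]]]].
exists (n1 + n2)%N,
  (fun j => match fintype.split j with inl a => f1 a | inr b => f2 b end),
  (fun j => match fintype.split j with inl a => c1 a | inr b => c2 b end).
split; first by move=> j; case: (fintype.split j).
rewrite big_split_ord /=; congr (_ + _); apply: eq_bigr => j _.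
  by rewrite (unsplitK (inl _ j)).
by rewrite (unsplitK (inr _ j)).
Qed.

Lemma spanN (P : V0 -> Prop) x : in_span P x -> in_span P (- x).
Proof. by move=> H; rewrite -scaleN1r; apply: spanZ. Qed.

Lemma spanB (P : V0 -> Prop) x y : in_span P x -> in_span P y -> in_span P (x - y).
Proof. by move=> Hx Hy; apply: spanD => //; apply: spanN. Qed.

Lemma span_sum (P : V0 -> Prop) n (F : 'I_n -> V0) :
  (forall j, in_span P (F j)) -> in_span P (\sum_(j < n) F j).
Proof.
elim: n F => [|n IH] F HF; first by rewrite big_ord0; apply: span0.
by rewrite big_ord_recr /=; apply: spanD; [apply: IH => j|]; apply: HF.
Qed.

Lemma sum_cut n m (G : nat -> V0) : (forall j, (n <= j)%N -> G j = 0) -> (n <= m)%N ->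
  \sum_(j < m) G j = \sum_(j < n) G j.
Proof.
move=> HG /subnK <-; elim: (m - n)%N => [//|d IH].
by rewrite addSn big_ord_recr /= IH HG ?addr0 // leq_addl.
Qed.

End Span.

Section VO2.
Variable R : realType.
Local Notation C := R[i].
Local Notation half := (@Pilot.Defs.half R).
Local Notation gbinom := (@gbinom R).
Variable V : vosa_data R.
Hypothesis HV : is_vosa V.
Local Notation D := (@Lop R V (-1)).

Lemma Yvac_neg n (u : V) :
  Yop V u (vac V) (- n%:Z - 1) = (n`!%:R)^-1 *: iter n D u.
Proof.
elim: n u => [|n IH] u.
  by rewrite /= fact0 invr1 scale1r sub0r (Y_create1 HV).
have := Lm1_der HV u (vac V) (- n.+1%:Z).
have E1 : - (n.+1)%:Z = - n%:Z - 1 by lia.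
rewrite E1 IH => H.
rewrite iterSr factS natrM invfM -scalerA H scalerA.
have -> : ((- n%:Z - 1)%:~R : C) = - (n.+1)%:R.
  by rewrite -E1 intrN.
by rewrite opprK mulVf ?scale1r // pnatr_eq0.
Qed.

Lemma res_vac a b (x : V) : res V a b x (vac V) =
  \sum_(j < b) (gbinom a j * ((b - 1 - j)`!)%:R^-1) *: iter (b - 1 - j) D x.
Proof.
rewrite /res (@sum_cut _ _ b _ (fun j : nat => gbinom a j *: Yop V x (vac V) (j%:Z - b%:Z))) ?leq_addl //; last first.
  by move=> j Hj; rewrite (Y_create HV) ?scaler0 //; lia.
apply: eq_bigr => j _.
have E : j%:Z - b%:Z = - (b - 1 - j)%N%:Z - 1.
  have := ltn_ord j; lia.
by rewrite E Yvac_neg scalerA.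
Qed.

End VO2.

Section Zeta.
Variable R : realType.
Local Notation C := R[i].

Definition Ez (th : R) : C := Complex (cos th) (- sin th).

Lemma zetaE T r : @zeta R T r = Ez (2%:R * pi * r%:R / T%:R).
Proof. by []. Qed.

Lemma EzM a b : Ez a * Ez b = Ez (a + b).
Proof.
rewrite /Ez cosD sinD.
transitivity (Complex (cos a * cos b - (- sin a) * (- sin b)) (cos a * (- sin b) + (- sin a) * cos b) : C); first by [].
by congr Complex; ring.
Qed.

Lemma zeta0 T : @zeta R T 0 = 1.
Proof. by rewrite zetaE mulr0 mul0r /Ez cos0 sin0 oppr0. Qed.

Lemma zetaS T r : @zeta R T r.+1 = zeta T r * zeta T 1.
Proof. by rewrite !zetaE EzM -mulrDl -mulrDr -natrD addn1. Qed.

Lemma zetaX T r : @zeta R T r = zeta T 1 ^+ r.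
Proof. by elim: r => [|r IH]; rewrite ?zeta0 ?expr0 // zetaS IH exprSr. Qed.

Lemma zetaT T : (0 < T)%N -> @zeta R T T = 1.
Proof.
move=> T0; rewrite zetaE mulfK ?pnatr_eq0 -?lt0n // mulr_natl.
by rewrite /Ez cos2pi sin2pi oppr0.
Qed.

Lemma zeta_neq1 T j : (0 < j < T)%N -> @zeta R T j != 1.
Proof.
move=> /andP [j0 jT]; rewrite zetaE /Ez; apply/negP => /eqP [] Hc _.
have T0 : (0 < T%:R :> R) by rewrite ltr0n; lia.
set th := 2%:R * pi * j%:R / T%:R in Hc.
have t0 : 0 < j%:R / T%:R :> R by rewrite divr_gt0 // ltr0n.
have t1 : j%:R / T%:R < 1 :> R by rewrite ltr_pdivrMr // mul1r ltr_nat.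
have pi0 := @pi_gt0 R.
have Eth : th = 2 * pi * (j%:R / T%:R) by rewrite /th mulrA.
have th0 : 0 < th by rewrite Eth; nra.
have th2 : th < 2 * pi by rewrite Eth; nra.
have cos0' : cos (0 : R) = 1 by rewrite cos0.
case: (lerP th pi) => hth.
  have := @ltr_cos R 0 th; rewrite !in_itv /= lexx (ltW pi0) (ltW th0) hth => /(_ isT isT).
  by rewrite th0 Hc cos0 ltxx.
have Ec : cos th = cos (pi *+ 2 - th) by rewrite cosB cos2pi sin2pi mul1r mul0r addr0.
have := @ltr_cos R 0 (pi *+ 2 - th).
rewrite !in_itv /= lexx (ltW pi0) => H.
have a1 : 0 <= pi *+ 2 - th by rewrite -mulr_natl; lra.
have a2 : pi *+ 2 - th <= pi by rewrite -mulr_natl; lra.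
have a3 : 0 < pi *+ 2 - th by rewrite -mulr_natl; lra.
move: (H isT); rewrite a1 a2 => /(_ isT).
by rewrite a3 -Ec Hc cos0 ltxx.
Qed.

End Zeta.

Section G.
Variable R : realType.
Local Notation C := R[i].
Local Notation half := (@Pilot.Defs.half R).
Local Notation gbinom := (@gbinom R).
Variable V : vosa_data R.
Hypothesis HV : is_vosa V.
Local Notation D := (@Lop R V (-1)).
Variable g : V -> V.
Hypothesis Hg : is_aut V g.
Variable T : nat.
Hypothesis HT : is_order V (sigg V g) T.
Variables l i : nat.
Hypothesis Hi : (i < T)%N.
Local Notation O := (Ogn V g T l i).
Local Notation h := (sigg V g).

Lemma g_l (a : C) x y : g (a *: x + y) = a *: g x + g y.
Proof. by case: Hg => H _ _ _ _; apply: H. Qed.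

Lemma h_l (a : C) x y : h (a *: x + y) = a *: h x + h y.
Proof. by rewrite /sigg g_l (sig_lin HV). Qed.

Lemma g_homog k x : Homog k x -> Homog k (g x).
Proof.
move=> Hx; apply: (eigen_homog HV).
case: Hg => _ _ HY _ Homg.
rewrite /Lop -Homg -HY -[Yop _ _ x _]/(Lop 0 x) (L0_wt HV Hx).
exact: (linfZ g_l).
Qed.

Lemma h_homog k x : Homog k x -> Homog k (h x).
Proof.
move=> Hx; rewrite /sigg (sig_homog HV (g_homog Hx)).
have := homogL HV ((-1) ^+ parity k) (g_homog Hx) (homog0 HV k).
by rewrite addr0.
Qed.

Lemma hiter_homog k x n : Homog k x -> Homog k (iter n h x).
Proof. by move=> Hx; elim: n => [//|n IH] /=; apply: h_homog. Qed.

Definition Pk (k : int) (m : nat) : C := \prod_(t < m) (- (half k + t%:R)).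

Lemma Dcongr k x m : Homog k x -> O (iter m D x - Pk k m *: x).
Proof.
move=> Hx; elim: m => [|m IH].
  by rewrite /= /Pk big_ord0 scale1r subrr; apply: span0.
have Hy := DHomog_iter HV m Hx.
set y := iter m D x in IH Hy *.
have G : O (D y + Lop 0 y) by apply: span_gen; right; exists y.
have E : iter m.+1 D x - Pk k m.+1 *: x =
    (D y + Lop 0 y) - (half k + m%:R) *: (y - Pk k m *: x).
  rewrite iterS -/y (L0_wt HV Hy).
  have -> : half (k + 2 * m%:Z) = half k + m%:R.
    by rewrite /half intrD intrM; field.
  rewrite /Pk big_ord_recr /= scalerBr scalerA mulrN scaleNr.
  set c := half k + m%:R. set P := \prod_(t < m) - (half k + t%:R).
  rewrite [c * P]mulrC opprB.
  rewrite -addrA; congr (_ + _).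
  by rewrite opprK addrCA subrr addr0.
rewrite E; apply: spanB => //; exact: spanZ.
Qed.

Lemma nonint (z : int) r : (0 < r < T)%N -> (z%:~R + r%:R / T%:R : C) != 0.
Proof.
move=> /andP [r0 rT]; apply/negP => /eqP H.
have T0 : (T%:R : C) != 0 by rewrite pnatr_eq0; lia.
have : ((z * T%:Z + r%:Z)%:~R : C) == 0.
  have -> : ((z * T%:Z + r%:Z)%:~R : C) = (z%:~R + r%:R / T%:R) * T%:R.
    by rewrite intrD intrM mulrDl divfK.
  by rewrite H mul0r.
rewrite intr_eq0 => /eqP E; clear H T0.
have r0' : (0 < r%:Z) by [].
have rT' : (r%:Z < T%:Z) by [].
case: (ltrP z 0) => hz.
  have hz' : z <= -1 by lia.
  nra.
nra.
Qed.

Lemma gbP k m : gbinom (- half k) m = (m`!%:R)^-1 * Pk k m.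
Proof.
rewrite /gbinom /Pk mulrC; congr (_ * _); apply: eq_bigr => t _.
by rewrite opprD.
Qed.

Lemma MO k r x : Homog k x -> vstar V g T r x -> (0 < r < T)%N -> O x.
Proof.
move=> Hx Hr rT.
have G1 : O (circ V T l i k r x (vac V)).
  apply: span_gen; left; exists r, k, x, (vac V); split => //.
  by case/andP: rT.
set a := half k - 1 + (deltai i r)%:R + l%:R + r%:R / T%:R.
set n := (2 * l + deltai i r + deltai i (T - r))%N.
set c := gbinom (a + - half k) n.
have Hc : c != 0.
  rewrite /c /gbinom mulf_neq0 // ?invr_eq0 ?factC_neq0 //.
  apply/prodf_neq0 => t _.
  have -> : a + - half k - t%:R = ((deltai i r + l)%:Z - 1 - t%:Z)%:~R + r%:R / T%:R.
    rewrite /a !intrB.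
    have P1 : forall q : nat, ((q%:Z)%:~R : C) = q%:R by [].
    rewrite !P1 natrD.
    move: (half k) ((deltai i r)%:R) (l%:R) (r%:R / T%:R) (t%:R : C) => A B L Q t'.
    ring.
  exact: nonint.
have G2 : O (circ V T l i k r x (vac V) - c *: x).
  rewrite /circ -/a -/n addn1 (res_vac HV).
  rewrite /c -(vandermonde n) scaler_suml -sumrB.
  apply: span_sum => j.
  rewrite subn1 /= gbP mulrA -[(_ * Pk k _) *: x]scalerA -scalerBr.
  by apply: spanZ; apply: Dcongr.
have -> : x = c^-1 *: (circ V T l i k r x (vac V) - (circ V T l i k r x (vac V) - c *: x)).
  by rewrite opprB addrC subrK scalerA mulVf ?scale1r.
by apply: spanZ; apply: spanB.
Qed.


Hypothesis T0 : (0 < T)%N.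
Local Notation w := (@zeta R T 1).

Lemma iterT v : iter T h v = v.
Proof. by case: HT. Qed.

Lemma wT : w ^+ T = 1.
Proof. by rewrite -zetaX zetaT. Qed.

Lemma w_neq0 : w != 0.
Proof.
apply/negP => /eqP w0; have := wT; rewrite w0 expr0n.
have -> : (T == 0%N) = false by lia.
by move/eqP; rewrite eq_sym oner_eq0.
Qed.

Lemma iter_l n (a : C) x y : iter n h (a *: x + y) = a *: iter n h x + iter n h y.
Proof. by elim: n => [//|n IH] /=; rewrite IH h_l. Qed.

Definition pr (r : nat) (v : V) : V :=
  (T%:R)^-1 *: \sum_(j < T) (w ^+ (r * j))^-1 *: iter j h v.

Lemma pr_l r (a : C) x y : pr r (a *: x + y) = a *: pr r x + pr r y.
Proof.
rewrite /pr scalerA mulrC -scalerA -scalerDr; congr (_ *: _).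
rewrite scaler_sumr -big_split /=; apply: eq_bigr => j _.
by rewrite iter_l scalerDr !scalerA mulrC.
Qed.

Lemma sum_shift n (F : nat -> V) : F n = F 0%N -> \sum_(j < n) F j.+1 = \sum_(j < n) F j.
Proof.
move=> HF.
have H1 : \sum_(j < n.+1) F j = F 0%N + \sum_(j < n) F j.+1 by rewrite big_ord_recl.
have H2 : \sum_(j < n.+1) F j = \sum_(j < n) F j + F n by rewrite big_ord_recr.
by move: H1; rewrite H2 HF addrC => /addrI ->.
Qed.

Lemma pr_eig r v : h (pr r v) = w ^+ r *: pr r v.
Proof.
rewrite /pr (linfZ h_l) scalerA mulrC -scalerA; congr (_ *: _).
rewrite (linf_sum h_l).
pose F := fun j : nat => (w ^+ (r * j))^-1 *: iter j h v.
have E : forall j : 'I_T, h ((w ^+ (r * j))^-1 *: iter j h v) = w ^+ r *: F j.+1.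
  move=> j; rewrite (linfZ h_l) /F scalerA -iterS; congr (_ *: _).
  rewrite mulnSr exprD invfM mulrCA mulfV ?mulr1 //.
  by rewrite expf_neq0 // w_neq0.
rewrite (eq_bigr _ (fun j _ => E j)) -scaler_sumr; congr (_ *: _).
rewrite (sum_shift (F := F)) //.
rewrite /F iterT muln0 mulnC exprM wT expr1n expr0 invr1.
by [].
Qed.

Lemma pr0 v : pr 0 v = pi0 V g T v.
Proof.
rewrite /pr /pi0; congr (_ *: _); apply: eq_bigr => j _.
by rewrite mul0n expr0 invr1 scale1r.
Qed.

Lemma pr_sum v : \sum_(r < T) pr r v = v.
Proof.
rewrite /pr -scaler_sumr exchange_big /=.
have E : forall j : 'I_T, \sum_(r < T) (w ^+ (r * j))^-1 *: iter j h v =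
   (\sum_(r < T) ((w ^+ j)^-1) ^+ r) *: iter j h v.
  move=> j; rewrite scaler_suml; apply: eq_bigr => r _.
  by rewrite mulnC exprM exprVn.
rewrite (eq_bigr _ (fun j _ => E j)).
have [T' ET] : exists T', T = T'.+1 by exists T.-1; lia.
have wT' : (zeta T'.+1 1 : C) ^+ T'.+1 = 1 by rewrite -ET; exact: wT.
rewrite ET big_ord_recl /= expr0 invr1.
have -> : \sum_(r < T'.+1) (1 : C) ^+ r = T'.+1%:R.
  by rewrite (eq_bigr (fun _ => 1)) ?sumr_const ?card_ord // => r _; rewrite expr1n.
rewrite [X in _ + X]big1 ?addr0.
  by rewrite scalerA mulVf ?scale1r // pnatr_eq0.
move=> j _.
set x := ((zeta T'.+1 1 : C) ^+ _)^-1.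
have x1 : x != 1.
  rewrite /x invr_eq1 -zetaX; apply: zeta_neq1.
  rewrite bump0S; have := ltn_ord j; lia.
have xT : x ^+ T'.+1 = 1 by rewrite /x exprVn -exprM mulnC exprM wT' expr1n invr1.
suff -> : \sum_(r < T'.+1) x ^+ r = 0 by rewrite scale0r.
have := subrX1 x T'.+1; rewrite xT subrr => /esym /eqP.
by rewrite mulf_eq0 subr_eq0 (negbTE x1) => /eqP.
Qed.

Lemma pr_homog k r v : Homog k v -> Homog k (pr r v).
Proof.
move=> Hv; rewrite /pr -[_ *: _]addr0; apply: homogL => //; last exact: homog0.
apply: homog_sum => // j; rewrite -[_ *: _]addr0; apply: homogL => //; last exact: homog0.
exact: hiter_homog.
Qed.

Lemma surjO v : O (v - pi0 V g T v).
Proof.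
rewrite -pr0.
have [T' ET] : exists T', T = T'.+1 by exists T.-1; lia.
have Hs := pr_sum v; rewrite [in \sum_(r < T) _]ET big_ord_recl /= in Hs.
rewrite -{1}Hs addrAC subrr add0r.
apply: span_sum => r; rewrite bump0S.
have [N [_ Hd]] := wtp_decomp HV v.
rewrite Hd (linf_sum (pr_l r.+1)); apply: span_sum => j.
apply: (MO (r := r.+1) (pr_homog _ (homog_wtp HV _ _))).
  by rewrite /vstar pr_eig (@zetaX R T r.+1).
rewrite ET; have := ltn_ord r; lia.
Qed.

End G.

Section Iota.
Variable R : realType.
Local Notation C := R[i].
Local Notation half := (@Pilot.Defs.half R).
Variables (V U : vosa_data R).
Hypotheses (HV : is_vosa V) (HU : is_vosa U).
Variable iota : U -> V.
Hypothesis Hiota : is_vosa_hom U V iota.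

Lemma iota_l (a : C) x y : iota (a *: x + y) = a *: iota x + iota y.
Proof. by case: Hiota => H _ _ _; apply: H. Qed.

Lemma iota_Y u v m : iota (Yop U u v m) = Yop V (iota u) (iota v) m.
Proof. by case: Hiota => _ H _ _; apply: H. Qed.

Lemma iota_L m x : iota (Lop m x) = Lop m (iota x).
Proof. by rewrite /Lop iota_Y; case: Hiota => _ _ _ ->. Qed.

Lemma iota_homog k x : Homog k x -> Homog k (iota x).
Proof.
move=> Hx; apply: (eigen_homog HV).
by rewrite -iota_L (L0_wt HU Hx) (linfZ iota_l).
Qed.

Lemma iota_wtp k x : iota (wtp U k x) = wtp V k (iota x).
Proof.
have [N [_ Hd]] := wtp_decomp HU x.
rewrite [in RHS]Hd (linf_sum iota_l) (linf_sum (wtp_lin HV k)).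
rewrite [in LHS]Hd (linf_sum (wtp_lin HU k)) (linf_sum iota_l).
apply: eq_bigr => j _; rewrite (wtp_idem HU).
set y := wtp U (j%:Z - N%:Z) x.
have Hy := iota_homog (homog_wtp HU (j%:Z - N%:Z) x); rewrite -/y in Hy.
have -> : wtp V k (iota y) = wtp V k (wtp V (j%:Z - N%:Z) (iota y)) by rewrite Hy.
rewrite (wtp_idem HV); case: eqP => _; first by rewrite Hy.
exact: linf0 iota_l.
Qed.

End Iota.

Section Bounds.
Variable R : realType.
Local Notation C := R[i].
Local Notation gbinom := (@gbinom R).

Lemma trunc_spec (W : vosa_data R) (HW : is_vosa W) (u v : W) :
  forall m, (trunc_bd u v)%:Z <= m -> Yop W u v m = 0.
Proof.
apply: (ClassicalEpsilon.epsilon_spec (inhabits 0%N)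
  (fun N : nat => forall m : int, (N%:Z <= m)%R -> Yop W u v m = 0)).
have [N HN] := Y_trunc HW u v.
exists (absz N) => m Hm; apply: HN.
apply: le_trans Hm; rewrite abszE; exact: ler_norm.
Qed.

Lemma wbound_spec (W : vosa_data R) (HW : is_vosa W) (u : W) :
  forall k : int, ((wbound u)%:Z < `|k|)%R -> wtp W k u = 0.
Proof.
apply: (ClassicalEpsilon.epsilon_spec (inhabits 0%N)
  (fun N : nat => forall k : int, (N%:Z < `|k|)%R -> wtp W k u = 0)).
by have [N [HN _]] := wtp_decomp HW u; exists N.
Qed.

Lemma res_any (W : vosa_data R) a b (u v : W) N :
  (forall m, N%:Z <= m -> Yop W u v m = 0) ->
  (forall m, (trunc_bd u v)%:Z <= m -> Yop W u v m = 0) ->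
  res W a b u v = \sum_(j < N + b) gbinom a j *: Yop W u v (j%:Z - b%:Z).
Proof.
move=> HN HT; rewrite /res.
set G := fun j : nat => gbinom a j *: Yop W u v (j%:Z - b%:Z).
rewrite -(@sum_cut _ _ (trunc_bd u v + b) (maxn (trunc_bd u v) N + b) G).
- rewrite -(@sum_cut _ _ (N + b) (maxn (trunc_bd u v) N + b) G) //.
  + move=> j Hj; rewrite /G HN ?scaler0 //; lia.
  + rewrite leq_add2r; exact: leq_maxr.
- move=> j Hj; rewrite /G HT ?scaler0 //; lia.
- rewrite leq_add2r; exact: leq_maxl.
Qed.

Lemma sym_sum (W : vosa_data R) (G : int -> W) (N M : nat) :
  (forall k : int, N%:Z < `|k| -> G k = 0) -> (N <= M)%N ->
  \sum_(j < M.*2.+1) G (j%:Z - M%:Z) = \sum_(j < N.*2.+1) G (j%:Z - N%:Z).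
Proof.
move=> HG /subnK <-; elim: (M - N)%N => [//|d IH].
rewrite -IH addSn doubleS.
set n := (d + N)%N.
have E1 : \sum_(j < n.*2.+3) G (j%:Z - n.+1%:Z) =
   G (0%:Z - n.+1%:Z) + \sum_(j < n.*2.+2) G (j.+1%:Z - n.+1%:Z) by rewrite big_ord_recl.
have E2 : \sum_(j < n.*2.+2) G (j.+1%:Z - n.+1%:Z) =
   \sum_(j < n.*2.+1) G (j.+1%:Z - n.+1%:Z) + G (n.*2.+2%:Z - n.+1%:Z) by rewrite big_ord_recr.
rewrite E1 E2 !HG ?add0r ?addr0; first 1 last.
- rewrite /n; lia.
- rewrite /n; lia.
apply: eq_bigr => j _; congr G; lia.
Qed.

End Bounds.

Lemma Y0l (R : realType) (W : vosa_data R) (HW : is_vosa W) (v : W) m : Yop W 0 v m = 0.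
Proof. exact: (linf0 (fun a x y => Y_linl HW a x y v m)). Qed.

Lemma star_hom0 (R : realType) (W : vosa_data R) (HW : is_vosa W) l k (v : W) :
  star_hom W l k 0 v = 0.
Proof.
rewrite /star_hom big1 // => m _; rewrite /res big1 ?scaler0 // => j _.
by rewrite Y0l ?scaler0.
Qed.

Section Iota2.
Variable R : realType.
Local Notation C := R[i].
Variables (V U : vosa_data R).
Hypotheses (HV : is_vosa V) (HU : is_vosa U).
Variable iota : U -> V.
Hypothesis Hiota : is_vosa_hom U V iota.

Lemma res_iota a b (u v : U) : iota (res U a b u v) = res V a b (iota u) (iota v).
Proof.
have il := iota_l Hiota.
rewrite (@res_any R U a b u v (trunc_bd u v) (@trunc_spec R U HU u v) (@trunc_spec R U HU u v)).
rewrite (@res_any R V a b (iota u) (iota v) (trunc_bd u v) _ (@trunc_spec R V HV (iota u) (iota v))); last first.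
  by move=> m Hm; rewrite -(iota_Y Hiota) (trunc_spec HU) // (linf0 il).
rewrite (linf_sum il); apply: eq_bigr => j _.
by rewrite (linfZ il) (iota_Y Hiota).
Qed.

Lemma star_hom_iota l k (y v : U) :
  iota (star_hom U l k y v) = star_hom V l k (iota y) (iota v).
Proof.
have il := iota_l Hiota.
rewrite /star_hom (linf_sum il); apply: eq_bigr => m _.
by rewrite (linfZ il) res_iota.
Qed.

End Iota2.

Theorem lemma3p2 (R : realType)
  (V : vosa_data R) (HV : is_vosa V)
  (g : V -> V) (Hg : is_aut V g)
  (Hgfin : exists k : nat, (0 < k)%N /\ forall v, iter k g v = v)
  (T : nat) (HT : is_order V (sigg V g) T)
  (l i : nat) (Hi : (i < T)%N)
  (U : vosa_data R) (HU : is_vosa U)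
  (iota : U -> V) (Hiota : is_vosa_hom U V iota) (Hinj : injective iota)
  (Himg : forall v : V, fixed_pt V g v <-> exists u : U, v = iota u) :
  (* V^{<sigma g>} = V^{0*} *)
  (forall v : V, fixed_pt V g v <-> vstar V g T 0 v) /\
  (* iota maps O_{sigma,l}(V^{<sigma g>}) into O_{g,n}(V), n = l + i/T *)
  (forall x : U, Ogn U (sig U) 1 l 0 x -> Ogn V g T l i (iota x)) /\
  (* the products *_{sigma,l} and *_{g,n} coincide on V^{0*} *)
  (forall u v : U, iota (star U (sig U) 1 l u v) = star V g T l (iota u) (iota v)) /\
  (* the induced map A_{sigma,l}(V^{<sigma g>}) -> A_{g,n}(V) is a well-defined
     algebra homomorphism (linear, multiplicative, unital) ... *)
  (forall u u' : U, Ogn U (sig U) 1 l 0 (u - u') ->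
      Ogn V g T l i (iota u - iota u')) /\
  (forall u v : U, Ogn V g T l i
      (iota (star U (sig U) 1 l u v) - star V g T l (iota u) (iota v))) /\
  (forall (a : R[i]) (u u' : U), iota (a *: u + u') = a *: iota u + iota u') /\
  iota (vac U) = vac V /\
  (* ... which is surjective *)
  (forall v : V, exists u : U, Ogn V g T l i (v - iota u)).
Proof.
have T0 : (0 < T)%N by case: HT.
have il := iota_l Hiota.
have C1 : forall v : V, fixed_pt V g v <-> vstar V g T 0 v.
  move=> v; rewrite /vstar zeta0 scale1r; split; first by move/(_ 1%N).
  by move=> hv k; elim: k => [//|k IH] /=; rewrite IH.
have fixI : forall (y : U) j, iter j (sigg V g) (iota y) = iota y.
  by move=> y j; apply: (proj2 (Himg (iota y))); exists y.
have C2 : forall x : U, Ogn U (sig U) 1 l 0 x -> Ogn V g T l i (iota x).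
  move=> x [n [f [c [Hf ->]]]]; rewrite (linf_sum il); apply: span_sum => j.
  rewrite (linfZ il); apply: spanZ; apply: span_gen.
  case: (Hf j) => [[r [k [u [v [r1 Hk Hs ->]]]]] | [u ->]].
    have r0 : r = 0%N by lia.
    subst r; left; exists 0%N, k, (iota u), (iota v); split => //.
    - exact: iota_homog Hk.
    - by rewrite /vstar zeta0 scale1r; exact: (fixI u 1%N).
    rewrite /circ /deltai leq0n !subn0 (leqNgt T i) Hi /= !mul0r.
    exact: res_iota.
  right; exists (iota u).
  by rewrite (linfD il) !(iota_L Hiota).
have pi0fix : forall y : U, pi0 V g T (iota y) = iota y.
  move=> y; rewrite /pi0 (eq_bigr (fun _ => iota y)); last by move=> j _; apply: fixI.
  rewrite sumr_const card_ord.
  have -> : iota y *+ T = (T%:R : R[i]) *: iota y by rewrite scaler_nat.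
  by rewrite scalerA mulVf ?scale1r // pnatr_eq0 -lt0n.
have C3 : forall u v : U, iota (star U (sig U) 1 l u v) = star V g T l (iota u) (iota v).
  move=> u v; rewrite /star.
  pose G := fun k : int => iota (star_hom U l k (wtp U k u) v).
  have EU : iota (\sum_(j < (wbound u).*2.+1)
      star_hom U l (j%:Z - (wbound u)%:Z) (pi0 U (sig U) 1 (wtp U (j%:Z - (wbound u)%:Z) u)) v)
      = \sum_(j < (wbound u).*2.+1) G (j%:Z - (wbound u)%:Z).
    rewrite (linf_sum il); apply: eq_bigr => j _.
    by rewrite /G /pi0 big_ord1 /= invr1 scale1r.
  have EV : \sum_(j < (wbound (iota u)).*2.+1)
      star_hom V l (j%:Z - (wbound (iota u))%:Z)
        (pi0 V g T (wtp V (j%:Z - (wbound (iota u))%:Z) (iota u))) (iota v)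
      = \sum_(j < (wbound (iota u)).*2.+1) G (j%:Z - (wbound (iota u))%:Z).
    apply: eq_bigr => j _.
    by rewrite /G (star_hom_iota HV HU Hiota) -(iota_wtp HV HU Hiota) pi0fix.
  rewrite EU EV.
  have HGU : forall k : int, (wbound u)%:Z < `|k| -> G k = 0.
    by move=> k Hk; rewrite /G (wbound_spec HU) // star_hom0 // (linf0 il).
  have HGV : forall k : int, (wbound (iota u))%:Z < `|k| -> G k = 0.
    move=> k Hk; rewrite /G (star_hom_iota HV HU Hiota) (iota_wtp HV HU Hiota).
    by rewrite (wbound_spec HV) // star_hom0.
  rewrite -(sym_sum HGU (leq_maxl (wbound u) (wbound (iota u)))).
  by rewrite -(sym_sum HGV (leq_maxr (wbound u) (wbound (iota u)))).
split => //; split => //; split => //.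
split.
  by move=> u u' H; rewrite -(linfB il); apply: C2.
split.
  by move=> u v; rewrite C3 subrr; apply: span0.
split => //.
split; first by case: Hiota.
move=> v.
have Hfix : fixed_pt V g (pi0 V g T v).
  apply/C1; rewrite /vstar zeta0 scale1r -(pr0 g T v).
  by rewrite (pr_eig HV Hg HT Hi T0) expr0 scale1r.
have [u Hu] := proj1 (Himg _) Hfix.
exists u; rewrite -Hu.
exact: (surjO HV Hg HT l Hi T0).
Qed.
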